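(* Let $\lambda>1$, $b>0$, $a\in\mathbb{R}$ and consider $$x_{n+1}=x_{n-1}^{\lambda}e^{a-bx_n-x_{n-1}},\qquad n\ge1,$$ with non-negative initial values $x_0,x_1$. (a) Every non-negative solution converges to $0$ if and only if $a<(\lambda-1)[1-\ln(\lambda-1)]$. (b) If $(\lambda-1)[1-\ln(\lambda-1)]<a<(\lambda-1)[1-\ln(\lambda-1)+\ln(b+1)]$, then the equation has no positive fixed points, but it has solutions with all terms positive that do not converge to $0$. (c) Assume $b\le\frac{\lambda-1}{\lambda}e^{1/(\lambda-1)}-1$ and $(\lambda-1)[1-\ln(\lambda-1)+\ln(b+1)]\le a\le\lambda-(\lambda-1)\ln\lambda$, and let $x^*$ be the smallest positive fixed point of the equation (i.e. the smallest positive solution of $x=x^\lambda e^{a-(b+1)x}$). Then there are initial values $x_0,x_1\in(0,x^* )$ whose solution is positive and does not converge to $0$. (d) Under the hypotheses of (c), for every initial pair $(x_0,x_1)\in([x^*,\lambda]\times[0,x^*])\cup([0,x^*]\times[x^*,\lambda])$ the corresponding solution does not converge to $0$.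
   Context: A fixed point of the equation is a positive number $x$ with $x=x^{\lambda}e^{a-(b+1)x}$. *)

(* Defs.v *)
From Stdlib Require Import Reals.
Open Scope R_scope.

(* Real power for non-negative bases: x^l = exp(l ln x) for x > 0, and 0^l = 0
   (the convention for l > 0; Stdlib's Rpower 0 l would give 1). *)
Definition rpow (x l : R) : R := if Rlt_dec 0 x then Rpower x l else 0.

Definition step (a b lam xprev xcur : R) : R :=
  rpow xprev lam * exp (a - b * xcur - xprev).

Fixpoint sol_pair (a b lam x0 x1 : R) (n : nat) : R * R :=
  match n with
  | O => (x0, x1)
  | S k => let p := sol_pair a b lam x0 x1 k in (snd p, step a b lam (fst p) (snd p))
  end.

Definition sol (a b lam x0 x1 : R) (n : nat) : R := fst (sol_pair a b lam x0 x1 n).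

Definition is_pos_fixed (a b lam x : R) : Prop :=
  0 < x /\ x = rpow x lam * exp (a - (b + 1) * x).

Definition is_smallest_pos_fixed (a b lam x : R) : Prop :=
  is_pos_fixed a b lam x /\ (forall y, is_pos_fixed a b lam y -> x <= y).

(* Main.v *)
Require Import Defs.
From Stdlib Require Import Reals Lra Lia Psatz Classical.
Open Scope R_scope.

Lemma exp_le_mono x y : x <= y -> exp x <= exp y.
Proof. intros [H|H]; [left; now apply exp_increasing | subst; lra]. Qed.

Lemma ln_le_sub1 t : 0 < t -> ln t <= t - 1.
Proof. intros Ht. pose proof (exp_ineq1_le (ln t)). rewrite exp_ln in H; lra. Qed.

Lemma ln_diff x y : 0 < x -> 0 < y -> ln x - ln y <= x / y - 1.
Proof.
  intros Hx Hy.
  assert (Hxy : 0 < x / y) by (apply Rdiv_lt_0_compat; lra).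
  replace (ln x) with (ln (y * (x / y))).
  2: { f_equal. field. lra. }
  rewrite ln_mult by lra. pose proof (ln_le_sub1 _ Hxy). lra.
Qed.

Lemma rpow_pos x l : 0 < x -> rpow x l = exp (l * ln x).
Proof. intros Hx. unfold rpow. destruct (Rlt_dec 0 x); [reflexivity|lra]. Qed.

Lemma rpow_nonpos x l : x <= 0 -> rpow x l = 0.
Proof. intros Hx. unfold rpow. destruct (Rlt_dec 0 x); [lra|reflexivity]. Qed.

Lemma rpow_ge0 x l : 0 <= rpow x l.
Proof. unfold rpow. destruct (Rlt_dec 0 x); [left; apply exp_pos|lra]. Qed.

Definition H (lam c x : R) := rpow x lam * exp (c - x).

Lemma H_pos_eq lam c x : 0 < x -> H lam c x = exp (lam * ln x + c - x).
Proof. intros Hx. unfold H. rewrite rpow_pos by lra. rewrite <- exp_plus. f_equal; ring. Qed.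

Lemma H_ge0 lam c x : 0 <= H lam c x.
Proof. unfold H. apply Rmult_le_pos; [apply rpow_ge0| left; apply exp_pos]. Qed.

Lemma H_pos lam c x : 0 < x -> 0 < H lam c x.
Proof. intros Hx. rewrite H_pos_eq by lra. apply exp_pos. Qed.

Lemma step_H a b lam u v : step a b lam u v = H lam (a - b * v) u.
Proof. reflexivity. Qed.

Lemma sol_SS a b lam x0 x1 n :
  sol a b lam x0 x1 (S (S n)) = step a b lam (sol a b lam x0 x1 n) (sol a b lam x0 x1 (S n)).
Proof. reflexivity. Qed.

Lemma sol_0 a b lam x0 x1 : sol a b lam x0 x1 0 = x0.
Proof. reflexivity. Qed.
Lemma sol_1 a b lam x0 x1 : sol a b lam x0 x1 1 = x1.
Proof. reflexivity. Qed.

Lemma sol_nonneg a b lam x0 x1 : 0 <= x0 -> 0 <= x1 -> forall n, 0 <= sol a b lam x0 x1 n.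
Proof.
  intros H0 H1.
  assert (HH : forall n, 0 <= sol a b lam x0 x1 n /\ 0 <= sol a b lam x0 x1 (S n)).
  { induction n as [|n IH]; [split; assumption|].
    split; [apply IH|]. rewrite sol_SS, step_H. apply H_ge0. }
  intro n; apply HH.
Qed.

Lemma sol_pos a b lam x0 x1 : 0 < x0 -> 0 < x1 -> forall n, 0 < sol a b lam x0 x1 n.
Proof.
  intros H0 H1.
  assert (HH : forall n, 0 < sol a b lam x0 x1 n /\ 0 < sol a b lam x0 x1 (S n)).
  { induction n as [|n IH]; [split; assumption|].
    split; [apply IH|]. rewrite sol_SS, step_H. apply H_pos, IH. }
  intro n; apply HH.
Qed.

Lemma H_mono_c lam c c' x : 0 <= x -> c <= c' -> H lam c x <= H lam c' x.
Proof.
  intros Hx Hc. unfold H. apply Rmult_le_compat_l; [apply rpow_ge0|].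
  apply exp_le_mono; lra.
Qed.

Lemma H_mono_x lam c x y : 1 < lam -> 0 <= x -> x <= y -> y <= lam -> H lam c x <= H lam c y.
Proof.
  intros Hl Hx Hxy Hy.
  destruct (Rle_lt_dec x 0) as [Hx0|Hx0].
  { unfold H at 1. rewrite rpow_nonpos by lra. rewrite Rmult_0_l. apply H_ge0. }
  rewrite !H_pos_eq by lra. apply exp_le_mono.
  pose proof (ln_diff x y Hx0 ltac:(lra)) as D.
  set (t := x / y) in *.
  assert (Ht : x = t * y) by (unfold t; field; lra).
  assert (t <= 1) by (unfold t; apply Rmult_le_reg_r with y; [lra|]; unfold Rdiv; rewrite Rmult_assoc, Rinv_l by lra; lra).
  assert (lam * (ln x - ln y) <= lam * (t - 1)) by (apply Rmult_le_compat_l; lra).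
  assert (lam * (t - 1) <= (t - 1) * y) by nra.
  nra.
Qed.

Definition thr lam := (lam - 1) * (1 - ln (lam - 1)).

Lemma step_le_q a b lam x y : 1 < lam -> 0 <= b -> 0 <= x -> 0 <= y ->
  step a b lam x y <= exp (a - thr lam) * x.
Proof.
  intros Hl Hb Hx Hy. rewrite step_H.
  destruct (Rle_lt_dec x 0) as [Hx0|Hx0].
  { unfold H. rewrite rpow_nonpos by lra. replace x with 0 by lra. lra. }
  apply Rle_trans with (H lam a x). { apply H_mono_c; nra. }
  rewrite H_pos_eq by lra. replace (exp (a - thr lam) * x) with (exp (a - thr lam + ln x)) by (rewrite exp_plus, exp_ln; lra).
  apply exp_le_mono. unfold thr.
  pose proof (ln_diff x (lam - 1) Hx0 ltac:(lra)) as D.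
  assert (H0 : (lam - 1) * (ln x - ln (lam - 1)) <= (lam - 1) * (x / (lam - 1) - 1))
    by (apply Rmult_le_compat_l; lra).
  replace ((lam - 1) * (x / (lam - 1) - 1)) with (x - (lam - 1)) in H0 by (field; lra).
  nra.
Qed.

Lemma part_a_conv a b lam x0 x1 : 1 < lam -> 0 < b -> a < thr lam -> 0 <= x0 -> 0 <= x1 ->
  Un_cv (sol a b lam x0 x1) 0.
Proof.
  intros Hl Hb Ha H0 H1.
  set (q := exp (a - thr lam)).
  assert (Hq0 : 0 < q) by apply exp_pos.
  assert (Hq1 : q < 1) by (unfold q; rewrite <- exp_0; apply exp_increasing; lra).
  pose proof (sol_nonneg a b lam x0 x1 H0 H1) as Hnn.
  assert (Hb2 : forall k, sol a b lam x0 x1 (2 * k) <= q ^ k * x0 /\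
                          sol a b lam x0 x1 (S (2 * k)) <= q ^ k * x1).
  { induction k as [|k IH].
    - simpl. rewrite sol_0, sol_1. lra.
    - replace (2 * S k)%nat with (S (S (2 * k))) by lia.
      rewrite (sol_SS _ _ _ _ _ (2*k)), (sol_SS _ _ _ _ _ (S (2*k))). destruct IH as [I1 I2]. change (q ^ S k) with (q * q ^ k).
      split.
      + eapply Rle_trans. apply step_le_q; [lra|lra|apply Hnn|apply Hnn].
        rewrite Rmult_assoc. apply Rmult_le_compat_l; lra.
      + eapply Rle_trans. apply step_le_q; [lra|lra|apply Hnn|apply Hnn].
        rewrite Rmult_assoc. apply Rmult_le_compat_l; lra. }
  intros eps Heps.
  destruct (pow_lt_1_zero q ltac:(rewrite Rabs_pos_eq; lra) (eps / (x0 + x1 + 1)))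
    as [N HN].
  { apply Rdiv_lt_0_compat; lra. }
  exists (2 * N)%nat. intros n Hn. unfold Rdist. rewrite Rminus_0_r.
  rewrite Rabs_pos_eq by apply Hnn.
  assert (Hk : exists k, (k >= N)%nat /\ (n = 2 * k \/ n = S (2 * k))%nat).
  { destruct (Nat.Even_or_Odd n) as [[k Hk]|[k Hk]]; exists k; split; lia. }
  destruct Hk as [k [Hk Hnk]].
  specialize (HN k Hk). rewrite Rabs_pos_eq in HN by (apply pow_le; lra).
  assert (Hqk : 0 <= q ^ k) by (apply pow_le; lra).
  assert (q ^ k * (x0 + x1 + 1) < eps).
  { apply Rmult_lt_reg_r with (/ (x0 + x1 + 1)). apply Rinv_0_lt_compat; lra.
    rewrite Rmult_assoc, Rinv_r by lra. lra. }
  destruct Hnk as [->| ->]; [destruct (Hb2 k) as [X _] | destruct (Hb2 k) as [_ X]]; nra.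
Qed.

Lemma cp_plus f g c : continuity_pt f c -> continuity_pt g c -> continuity_pt (fun x => f x + g x) c.
Proof. intros X Y; exact (continuity_pt_plus f g c X Y). Qed.
Lemma cp_minus f g c : continuity_pt f c -> continuity_pt g c -> continuity_pt (fun x => f x - g x) c.
Proof. intros X Y; exact (continuity_pt_minus f g c X Y). Qed.
Lemma cp_mult f g c : continuity_pt f c -> continuity_pt g c -> continuity_pt (fun x => f x * g x) c.
Proof. intros X Y; exact (continuity_pt_mult f g c X Y). Qed.
Lemma cp_const k c : continuity_pt (fun _ => k) c.
Proof. apply continuity_pt_const. intros x y; reflexivity. Qed.
Lemma cp_comp f g c : continuity_pt f c -> continuity_pt g (f c) -> continuity_pt (fun x => g (f x)) c.
Proof. intros X Y; exact (continuity_pt_comp f g c X Y). Qed.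
Lemma cp_ln y : 0 < y -> continuity_pt ln y.
Proof. intros Hy. apply derivable_continuous_pt. exists (/ y). now apply derivable_pt_lim_ln. Qed.
Lemma cp_exp y : continuity_pt exp y.
Proof. apply derivable_continuous_pt, derivable_pt_exp. Qed.

Lemma sol_cont a b lam x1 c : 0 < x1 -> 0 < c -> forall n,
  continuity_pt (fun x => sol a b lam x x1 n) c /\ continuity_pt (fun x => sol a b lam x x1 (S n)) c.
Proof.
  intros H1 Hc n. induction n as [|n [IH1 IH2]].
  - split. exact (derivable_continuous_pt id c (derivable_pt_id c)). exact (cp_const x1 c).
  - split; [exact IH2|].
    apply (continuity_pt_locally_ext
      (fun x => exp (lam * ln (sol a b lam x x1 n) + (a - b * sol a b lam x x1 (S n))
                          - sol a b lam x x1 n)) _ c); [exact Hc| |].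
    + intros y Hy. unfold Rdist in Hy.
      assert (Hy0 : 0 < y) by (apply Rabs_def2 in Hy; lra).
      rewrite sol_SS, step_H, H_pos_eq; [reflexivity|]. apply sol_pos; lra.
    + apply cp_comp; [|apply cp_exp].
      apply cp_minus; [apply cp_plus|exact IH1].
      * apply cp_mult; [apply cp_const|]. apply cp_comp; [exact IH1|].
        apply cp_ln. apply sol_pos; lra.
      * apply cp_minus; [apply cp_const|]. apply cp_mult; [apply cp_const|exact IH2].
Qed.

Lemma cont_lt g c C : continuity_pt g c -> g c < C ->
  exists d, 0 < d /\ forall y, Rabs (y - c) < d -> g y < C.
Proof.
  intros Hg Hlt. destruct (Hg (C - g c) ltac:(lra)) as [d [Hd Hp]].
  exists d. split; [lra|]. intros y Hy.
  destruct (Req_dec y c) as [->|Hne]; [lra|].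
  assert (Hd' : dist R_met y c < d) by exact Hy.
  specialize (Hp y (conj (conj I (not_eq_sym Hne)) Hd')).
  simpl in Hp. unfold Rdist in Hp. apply Rabs_def2 in Hp. lra.
Qed.

Lemma open_lt (F : nat -> R -> R) (C : nat -> R) c N :
  (forall k, continuity_pt (F k) c) -> (forall k, (k < N)%nat -> F k c < C k) ->
  exists d, 0 < d /\ forall y, Rabs (y - c) < d -> forall k, (k < N)%nat -> F k y < C k.
Proof.
  intros Hc. induction N as [|N IH]; intros Hlt.
  - exists 1. split; [lra|]. intros; lia.
  - destruct IH as [d1 [Hd1 P1]]. { intros k Hk; apply Hlt; lia. }
    destruct (cont_lt (F N) c (C N) (Hc N) (Hlt N ltac:(lia))) as [d2 [Hd2 P2]].
    exists (Rmin d1 d2). split. { apply Rmin_case; lra. }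
    intros y Hy k Hk. pose proof (Rmin_l d1 d2); pose proof (Rmin_r d1 d2).
    destruct (Nat.eq_dec k N) as [->|Hne].
    + apply P2; lra.
    + apply P1; [lra|lia].
Qed.

Lemma not_cv (s : nat -> R) m n0 : 0 < m -> (forall k, m <= s (n0 + 2 * k)%nat) -> ~ Un_cv s 0.
Proof.
  intros Hm Hk Hcv. destruct (Hcv m Hm) as [N HN].
  specialize (HN (n0 + 2 * N)%nat ltac:(lia)). specialize (Hk N).
  unfold Rdist in HN. rewrite Rminus_0_r in HN.
  pose proof (Rle_abs (s (n0 + 2 * N)%nat)). lra.
Qed.

Lemma ln_le_mono x y : 0 < x -> x <= y -> ln x <= ln y.
Proof. intros Hx [Hxy|Hxy]; [left; apply ln_increasing; lra| subst; lra]. Qed.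

Lemma constr a b lam : 1 < lam -> 0 < b -> thr lam < a ->
  exists x0 x1, 0 < x0 /\ 0 < x1 /\ (forall n, 0 < sol a b lam x0 x1 n) /\
    ~ Un_cv (sol a b lam x0 x1) 0.
Proof.
  intros Hl Hb Ha.
  set (beta := lam - 1).
  set (d := a - thr lam).
  set (K := Rabs a / (lam - 1) + Rabs (ln (d / (2 * b)))).
  set (eps := exp (- K)).
  set (M := (Rabs a + 1) / (lam - 1) + Rabs (ln beta)).
  set (alpha := exp (- M)).
  assert (Hbeta : 0 < beta) by (unfold beta; lra).
  assert (Hd : 0 < d) by (unfold d; lra).
  assert (Heps : 0 < eps) by apply exp_pos.
  assert (Halpha : 0 < alpha) by apply exp_pos.
  assert (F1 : (lam - 1) * ln eps + a <= 0).
  { unfold eps. rewrite ln_exp. unfold K.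
    assert (E1 : (lam - 1) * (Rabs a / (lam - 1)) = Rabs a) by (field; lra).
    pose proof (Rabs_pos (ln (d / (2 * b)))) as E2. pose proof (Rle_abs a) as E3.
    assert (E4 : 0 <= (lam - 1) * Rabs (ln (d / (2 * b)))) by (apply Rmult_le_pos; lra).
    rewrite Ropp_plus_distr, Rmult_plus_distr_l. 
    replace ((lam - 1) * - (Rabs a / (lam - 1))) with (- Rabs a) by (field; lra).
    lra. }
  assert (F2 : b * eps <= d / 2).
  { assert (H0 : eps <= d / (2 * b)).
    { unfold eps. rewrite <- (exp_ln (d / (2 * b))) by (apply Rdiv_lt_0_compat; lra).
      apply exp_le_mono. unfold K.
      pose proof (Rle_abs (- ln (d / (2 * b)))) as E1. rewrite Rabs_Ropp in E1.
      assert (0 <= Rabs a / (lam - 1)) by (unfold Rdiv; apply Rmult_le_pos; [apply Rabs_pos|left; apply Rinv_0_lt_compat; lra]).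
      lra. }
    apply Rmult_le_compat_l with (r := b) in H0; [|lra].
    replace (b * (d / (2 * b))) with (d / 2) in H0 by (field; lra). lra. }
  assert (F3 : (lam - 1) * ln alpha + a < 0).
  { unfold alpha. rewrite ln_exp. unfold M.
    assert (E1 : (lam - 1) * ((Rabs a + 1) / (lam - 1)) = Rabs a + 1) by (field; lra).
    pose proof (Rabs_pos (ln beta)) as E2. pose proof (Rle_abs a) as E3.
    assert (E4 : 0 <= (lam - 1) * Rabs (ln beta)) by (apply Rmult_le_pos; lra).
    rewrite Ropp_plus_distr, Rmult_plus_distr_l. 
    replace ((lam - 1) * - ((Rabs a + 1) / (lam - 1))) with (- (Rabs a + 1)) by (field; lra).
    lra. }
  assert (F4 : alpha < beta).
  { unfold alpha. rewrite <- (exp_ln beta) by lra. apply exp_increasing. unfold M.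
    pose proof (Rle_abs (- ln beta)) as E1. rewrite Rabs_Ropp in E1.
    assert (0 < (Rabs a + 1) / (lam - 1)) by (apply Rdiv_lt_0_compat; [pose proof (Rabs_pos a)|]; lra).
    lra. }
  set (s := fun n x => sol a b lam x eps n).
  assert (Odd : forall x, 0 < x -> forall k, 0 < s (S (2 * k)) x <= eps).
  { intros x Hx k. induction k as [|k IH].
    - unfold s. change (S (2 * 0)) with 1%nat. rewrite sol_1. lra.
    - unfold s in *. replace (S (2 * S k)) with (S (S (S (2 * k)))) by lia.
      rewrite sol_SS, step_H.
      set (z := sol a b lam x eps (S (2 * k))) in *.
      assert (Hy : 0 < sol a b lam x eps (S (S (2 * k)))) by (apply sol_pos; lra).
      split; [apply H_pos; lra|].
      apply Rle_trans with z; [|lra].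
      apply Rle_trans with (H lam a z). { apply H_mono_c; nra. }
      rewrite H_pos_eq by lra. rewrite <- (exp_ln z) at 3 by lra. apply exp_le_mono.
      pose proof (ln_le_mono z eps ltac:(lra) ltac:(lra)).
      assert ((lam - 1) * ln z <= (lam - 1) * ln eps) by (apply Rmult_le_compat_l; lra).
      assert (lam * ln z = (lam-1)*ln z + ln z) by ring. lra. }
  assert (Lb : forall x k, 0 < x -> s (2 * k)%nat x = beta -> beta < s (2 * S k)%nat x).
  { intros x k Hx Hk. unfold s in *. replace (2 * S k)%nat with (S (S (2 * k))) by lia.
    rewrite sol_SS, step_H, Hk, H_pos_eq by lra.
    destruct (Odd x Hx k) as [Z1 Z2]. unfold s in Z1, Z2.
    set (z := sol a b lam x eps (S (2 * k))) in *.
    rewrite <- (exp_ln beta) at 1 by lra. apply exp_increasing.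
    assert (b * z <= b * eps) by (apply Rmult_le_compat_l; lra).
    assert (E : lam * ln beta + (a - b * z) - beta - ln beta = d - b * z).
    { unfold d, thr, beta. ring. }

    lra. }
  assert (La : forall x k, 0 < x -> s (2 * k)%nat x = alpha -> s (2 * S k)%nat x < alpha).
  { intros x k Hx Hk. unfold s in *. replace (2 * S k)%nat with (S (S (2 * k))) by lia.
    rewrite sol_SS, step_H, Hk, H_pos_eq by lra.
    destruct (Odd x Hx k) as [Z1 Z2]. unfold s in Z1, Z2.
    set (z := sol a b lam x eps (S (2 * k))) in *.
    rewrite <- (exp_ln alpha) at 3 by lra. apply exp_increasing.
    assert (0 < b * z) by nra.
    assert (E : lam * ln alpha + (a - b * z) - alpha - ln alpha
                = ((lam - 1) * ln alpha + a) - b * z - alpha) by ring.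
    lra. }

  set (Elow := fun x => exists N, s (2 * N)%nat x < alpha /\ forall k, (k < N)%nat -> s (2 * k)%nat x < beta).
  set (Ehigh := fun x => exists N, beta < s (2 * N)%nat x /\ forall k, (k < N)%nat -> alpha < s (2 * k)%nat x).
  assert (Disj : forall x, Elow x -> Ehigh x -> False).
  { intros x [N1 [A1 B1]] [N2 [A2 B2]].
    destruct (Nat.lt_total N1 N2) as [Hlt|[Heq|Hgt]].
    - specialize (B2 N1 Hlt). lra.
    - subst. lra.
    - specialize (B1 N2 Hgt). lra. }
  assert (Cont : forall c, 0 < c -> forall n, continuity_pt (s n) c).
  { intros c Hc n. exact (proj1 (sol_cont a b lam eps c Heps Hc n)). }
  assert (OpenL : forall c, 0 < c -> Elow c -> exists dl, 0 < dl /\ forall y, Rabs (y - c) < dl -> Elow y).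
  { intros c Hc [N [A1 B1]].
    destruct (open_lt (fun k => s (2 * k)%nat) (fun _ => beta) c N (fun k => Cont c Hc _) B1) as [d1 [Hd1 P1]].
    destruct (cont_lt (s (2 * N)%nat) c alpha (Cont c Hc _) A1) as [d2 [Hd2 P2]].
    exists (Rmin d1 d2). split; [apply Rmin_case; lra|].
    intros y Hy. pose proof (Rmin_l d1 d2). pose proof (Rmin_r d1 d2).
    exists N. split; [apply P2; lra|]. intros k Hk. apply (P1 y ltac:(lra) k Hk). }
  assert (OpenH : forall c, 0 < c -> Ehigh c -> exists dl, 0 < dl /\ forall y, Rabs (y - c) < dl -> Ehigh y).
  { intros c Hc [N [A1 B1]].
    destruct (open_lt (fun k x => - s (2 * k)%nat x) (fun _ => - alpha) c N
               (fun k => continuity_pt_opp _ c (Cont c Hc _))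
               (fun k Hk => Ropp_lt_contravar _ _ (B1 k Hk))) as [d1 [Hd1 P1]].
    destruct (cont_lt (fun x => - s (2 * N)%nat x) c (- beta)
               (continuity_pt_opp _ c (Cont c Hc _)) ltac:(lra)) as [d2 [Hd2 P2]].
    exists (Rmin d1 d2). split; [apply Rmin_case; lra|].
    intros y Hy. pose proof (Rmin_l d1 d2). pose proof (Rmin_r d1 d2).
    exists N. split. { specialize (P2 y ltac:(lra)). cbv beta in P2. lra. }
    intros k Hk. specialize (P1 y ltac:(lra) k Hk). cbv beta in P1. lra. }
  assert (ElowA : forall y, y < alpha -> Elow y).
  { intros y Hy. exists 0%nat. split; [|intros; lia].
    unfold s. change (sol a b lam y eps 0 < alpha). rewrite sol_0. lra. }
  assert (EhighB : forall y, beta < y -> Ehigh y).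
  { intros y Hy. exists 0%nat. split; [|intros; lia].
    unfold s. change (beta < sol a b lam y eps 0). rewrite sol_0. lra. }
  set (a0 := alpha / 2). set (b0 := 2 * beta).
  set (A := fun x => a0 <= x <= b0 /\ forall y, a0 <= y <= x -> Elow y).
  assert (HA0 : A a0).
  { split; [unfold a0, b0; lra|]. intros y Hy; apply ElowA; unfold a0 in Hy; lra. }
  destruct (completeness A) as [c [Hub Hlub]].
  { exists b0. intros x [Hx _]; lra. }
  { exists a0; exact HA0. }
  assert (Hc1 : a0 <= c) by (apply Hub; exact HA0).
  assert (Hc2 : c <= b0) by (apply Hlub; intros x [Hx _]; lra).
  assert (Hcpos : 0 < c) by (unfold a0 in Hc1; lra).
  assert (Below : forall y, a0 <= y < c -> Elow y).
  { intros y Hy. destruct (classic (Elow y)) as [E|NE]; [exact E|exfalso].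
    assert (Hu : is_upper_bound A y).
    { intros x [Hx Hall]. destruct (Rle_lt_dec x y) as [|Hlt]; [assumption|].
      exfalso; apply NE, Hall; lra. }
    specialize (Hlub y Hu); lra. }
  assert (NotL : ~ Elow c).
  { intro E. destruct (OpenL c Hcpos E) as [dl [Hdl P]].
    destruct (Rlt_le_dec c b0) as [Hlt|Hge].
    - set (x' := Rmin (c + dl / 2) b0).
      assert (Hx1 : x' <= c + dl / 2) by apply Rmin_l.
      assert (Hx2 : x' <= b0) by apply Rmin_r.
      assert (Hx3 : c < x') by (apply Rmin_glb_lt; lra).
      assert (HA : A x').
      { split; [lra|]. intros y Hy. destruct (Rlt_le_dec y c) as [Hyc|Hyc].
        - apply Below; lra.
        - apply P. rewrite Rabs_pos_eq; lra. }
      specialize (Hub x' HA). lra.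
    - apply (Disj c E). apply EhighB. unfold b0 in Hc2, Hge. lra. }
  assert (NotH : ~ Ehigh c).
  { intro E. destruct (OpenH c Hcpos E) as [dl [Hdl P]].
    destruct (Rle_lt_dec c a0) as [Hle|Hlt].
    - apply (Disj c); [|exact E]. apply ElowA. unfold a0 in Hle. lra.
    - set (y := Rmax a0 (c - dl / 2)).
      assert (Hy1 : a0 <= y) by apply Rmax_l.
      assert (Hy2 : c - dl / 2 <= y) by apply Rmax_r.
      assert (Hy3 : y < c) by (apply Rmax_lub_lt; lra).
      apply (Disj y). apply Below; lra. apply P. rewrite Rabs_minus_sym, Rabs_pos_eq; lra. }
  assert (Inv : forall N k, (k <= N)%nat -> alpha <= s (2 * k)%nat c <= beta).
  { induction N as [|N IHN].
    - intros k Hk. assert (k = 0%nat) by lia. subst k.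
      unfold s. change (alpha <= sol a b lam c eps 0 <= beta). rewrite sol_0.
      split.
      + destruct (Rlt_le_dec c alpha) as [Hlt|]; [|assumption]. exfalso. apply NotL, ElowA, Hlt.
      + destruct (Rlt_le_dec beta c) as [Hlt|]; [|assumption]. exfalso. apply NotH, EhighB, Hlt.
    - intros k Hk. destruct (Nat.eq_dec k (S N)) as [->|Hne]; [|apply IHN; lia].
      split.
      + destruct (Rlt_le_dec (s (2 * S N)%nat c) alpha) as [Hlt|]; [exfalso|assumption].
        apply NotL. exists (S N). split; [exact Hlt|]. intros k Hk'.
        destruct (Rlt_le_dec (s (2 * k)%nat c) beta) as [|Hge]; [assumption|exfalso].
        assert (Heqb : s (2 * k)%nat c = beta) by (pose proof (IHN k ltac:(lia)); lra).
        pose proof (Lb c k Hcpos Heqb).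
        destruct (Nat.eq_dec k N) as [->|Hne'].
        * lra.
        * pose proof (IHN (S k) ltac:(lia)); lra.
      + destruct (Rlt_le_dec beta (s (2 * S N)%nat c)) as [Hlt|]; [exfalso|assumption].
        apply NotH. exists (S N). split; [exact Hlt|]. intros k Hk'.
        destruct (Rlt_le_dec alpha (s (2 * k)%nat c)) as [|Hge]; [assumption|exfalso].
        assert (Heqa : s (2 * k)%nat c = alpha) by (pose proof (IHN k ltac:(lia)); lra).
        pose proof (La c k Hcpos Heqa).
        destruct (Nat.eq_dec k N) as [->|Hne'].
        * lra.
        * pose proof (IHN (S k) ltac:(lia)); lra. }
  exists c, eps. split; [exact Hcpos|]. split; [exact Heps|]. split.
  - apply sol_pos; lra.
  - apply (not_cv _ alpha 0%nat Halpha). intro k. exact (proj1 (Inv k k (le_n k))).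
Qed.

Lemma fix_eq a b lam x : is_pos_fixed a b lam x -> ln x = lam * ln x + a - (b + 1) * x.
Proof.
  intros [Hx Hf]. rewrite rpow_pos in Hf by lra. rewrite <- exp_plus in Hf.
  rewrite Hf at 1. rewrite ln_exp. ring.
Qed.

Lemma no_fixed a b lam x : 1 < lam -> 0 < b ->
  a < (lam - 1) * (1 - ln (lam - 1) + ln (b + 1)) -> ~ is_pos_fixed a b lam x.
Proof.
  intros Hl Hb Ha Hf. pose proof (fix_eq _ _ _ _ Hf) as E. destruct Hf as [Hx _].
  set (m := (lam - 1) / (b + 1)).
  assert (Hm : 0 < m) by (unfold m; apply Rdiv_lt_0_compat; lra).
  pose proof (ln_diff x m Hx Hm) as D.
  assert (Lm : ln (lam - 1) = ln m + ln (b + 1)).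
  { rewrite <- ln_mult by lra. f_equal. unfold m. field. lra. }
  assert (Hxm : (lam - 1) * (x / m) = (b + 1) * x) by (unfold m; field; lra).
  assert (D2 : (lam - 1) * (ln x - ln m) <= (lam - 1) * (x / m - 1)) by (apply Rmult_le_compat_l; lra).
  assert (E2 : lam * ln x = (lam - 1) * ln x + ln x) by ring.
  nra.
Qed.

Lemma fixed_lt_lam a b lam xs : 1 < lam -> 0 < b -> a <= lam - (lam - 1) * ln lam ->
  is_pos_fixed a b lam xs -> xs < lam.
Proof.
  intros Hl Hb Ha Hf. pose proof (fix_eq _ _ _ _ Hf) as E. destruct Hf as [Hx _].
  destruct (Rlt_le_dec xs lam) as [|Hge]; [assumption|exfalso].
  pose proof (ln_diff xs lam Hx ltac:(lra)) as D.
  assert (D2 : (lam - 1) * (ln xs - ln lam) <= (lam - 1) * (xs / lam - 1)) by (apply Rmult_le_compat_l; lra).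
  set (t := xs / lam) in *.
  assert (Ht : xs = t * lam) by (unfold t; field; lra).
  assert (t >= 1) by (rewrite Ht in Hge; nra).
  assert (E2 : lam * ln xs = (lam - 1) * ln xs + ln xs) by ring.
  assert (0 < b * xs) by nra.
  nra.
Qed.

Lemma H_fix a b lam xs : is_pos_fixed a b lam xs -> H lam (a - b * xs) xs = xs.
Proof.
  intros [Hx Hf]. unfold H. replace (a - b * xs - xs) with (a - (b + 1) * xs) by ring. symmetry; exact Hf.
Qed.

Lemma f_lam a lam : 1 < lam -> a <= lam - (lam - 1) * ln lam -> H lam a lam <= lam.
Proof.
  intros Hl Ha. rewrite H_pos_eq by lra. rewrite <- (exp_ln lam) at 4 by lra.
  apply exp_le_mono. nra.
Qed.

Definition Inv a b lam x0 x1 xs n :=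
  xs <= sol a b lam x0 x1 n <= lam /\ 0 <= sol a b lam x0 x1 (S n) <= xs.

Lemma inv_step a b lam x0 x1 xs n : 1 < lam -> 0 < b -> a <= lam - (lam - 1) * ln lam ->
  is_pos_fixed a b lam xs -> Inv a b lam x0 x1 xs n -> Inv a b lam x0 x1 xs (S (S n)).
Proof.
  intros Hl Hb Ha Hf [[I1 I2] [I3 I4]].
  pose proof (fixed_lt_lam _ _ _ _ Hl Hb Ha Hf) as Hxl.
  pose proof (H_fix _ _ _ _ Hf) as HF. destruct Hf as [Hxs _].
  set (u := sol a b lam x0 x1 n) in *. set (v := sol a b lam x0 x1 (S n)) in *.
  assert (Ew : sol a b lam x0 x1 (S (S n)) = H lam (a - b * v) u) by reflexivity.
  assert (W1 : xs <= H lam (a - b * v) u).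
  { apply Rle_trans with (H lam (a - b * xs) u).
    - rewrite <- HF at 1. apply H_mono_x; lra.
    - apply H_mono_c; nra. }
  assert (W2 : H lam (a - b * v) u <= lam).
  { apply Rle_trans with (H lam a u). apply H_mono_c; nra.
    apply Rle_trans with (H lam a lam). apply H_mono_x; lra. apply f_lam; lra. }
  unfold Inv. split.
  - rewrite Ew. lra.
  - change (sol a b lam x0 x1 (S (S (S n)))) with
      (H lam (a - b * sol a b lam x0 x1 (S (S n))) v).
    rewrite Ew. split; [apply H_ge0|].
    apply Rle_trans with (H lam (a - b * xs) v). apply H_mono_c; nra.
    rewrite <- HF at 2. apply H_mono_x; lra.
Qed.

Lemma inv_notcv a b lam x0 x1 xs n : 1 < lam -> 0 < b -> a <= lam - (lam - 1) * ln lam ->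
  is_pos_fixed a b lam xs -> Inv a b lam x0 x1 xs n -> ~ Un_cv (sol a b lam x0 x1) 0.
Proof.
  intros Hl Hb Ha Hf HI.
  assert (All : forall k, Inv a b lam x0 x1 xs (n + 2 * k)).
  { induction k as [|k IH]. { rewrite Nat.add_0_r. exact HI. }
    replace (n + 2 * S k)%nat with (S (S (n + 2 * k))) by lia. apply inv_step; auto. }
  destruct Hf as [Hxs Hf'].
  apply (not_cv _ xs n Hxs). intro k. apply (All k).
Qed.

Lemma const_case a b lam : 1 < lam -> a = thr lam ->
  forall k, sol a b lam (lam - 1) 0 (2 * k) = lam - 1 /\ sol a b lam (lam - 1) 0 (S (2 * k)) = 0.
Proof.
  intros Hl Ha k. induction k as [|k [IH1 IH2]].
  - split; reflexivity.
  - replace (2 * S k)%nat with (S (S (2 * k))) by lia.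
    rewrite (sol_SS _ _ _ _ _ (2 * k)), (sol_SS _ _ _ _ _ (S (2 * k))).
    rewrite IH1, IH2. rewrite !step_H.
    assert (E : H lam (a - b * 0) (lam - 1) = lam - 1).
    { rewrite H_pos_eq by lra. rewrite <- (exp_ln (lam - 1)) at 3 by lra. f_equal.
      rewrite Ha. unfold thr. ring. }
    rewrite E. split; [reflexivity|]. unfold H. rewrite rpow_nonpos by lra. ring.
Qed.

Lemma part_c a b lam xs : 1 < lam -> 0 < b -> a <= lam - (lam - 1) * ln lam ->
  is_pos_fixed a b lam xs ->
  exists x0 x1, 0 < x0 < xs /\ 0 < x1 < xs /\
      (forall n, 0 < sol a b lam x0 x1 n) /\ ~ Un_cv (sol a b lam x0 x1) 0.
Proof.
  intros Hl Hb Ha Hf.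
  pose proof (fixed_lt_lam _ _ _ _ Hl Hb Ha Hf) as Hxl.
  pose proof (H_fix _ _ _ _ Hf) as HF. pose proof (fix_eq _ _ _ _ Hf) as FE.
  pose proof Hf as [Hxs _].
  set (x0 := xs * exp (- (b * xs) / (2 * lam))).
  set (x1 := xs / 2).
  assert (He : exp (- (b * xs) / (2 * lam)) < 1).
  { rewrite <- exp_0. apply exp_increasing. unfold Rdiv.
    assert (0 < / (2 * lam)) by (apply Rinv_0_lt_compat; lra). assert (0 < b * xs) by (apply Rmult_lt_0_compat; lra). nra. }
  assert (Hx0 : 0 < x0 < xs).
  { unfold x0. pose proof (exp_pos (- (b * xs) / (2 * lam))) as Ep. split.
    - apply Rmult_lt_0_compat; lra.
    - nra. }
  assert (Hx1 : 0 < x1 < xs) by (unfold x1; lra).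
  exists x0, x1. split; [exact Hx0|]. split; [exact Hx1|]. split.
  { apply sol_pos; lra. }
  apply (inv_notcv a b lam x0 x1 xs 2 Hl Hb Ha Hf).
  assert (E2 : sol a b lam x0 x1 2 = H lam (a - b * x1) x0) by reflexivity.
  assert (W1 : xs <= H lam (a - b * x1) x0).
  { rewrite H_pos_eq by lra. rewrite <- (exp_ln xs) at 1 by lra. apply exp_le_mono.
    assert (L0 : ln x0 = ln xs + - (b * xs) / (2 * lam)).
    { unfold x0. rewrite ln_mult by (try apply exp_pos; lra). rewrite ln_exp. reflexivity. }
    rewrite L0. unfold x1.
    assert (lam * (ln xs + - (b * xs) / (2 * lam)) = lam * ln xs - b * xs / 2) by (field; lra).
    lra. }
  assert (W2 : H lam (a - b * x1) x0 <= lam).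
  { apply Rle_trans with (H lam a x0). apply H_mono_c; unfold x1; nra.
    apply Rle_trans with (H lam a lam). apply H_mono_x; lra. apply f_lam; lra. }
  unfold Inv. rewrite E2. split; [lra|].
  change (sol a b lam x0 x1 3) with (H lam (a - b * sol a b lam x0 x1 2) x1).
  rewrite E2. split; [apply H_ge0|].
  apply Rle_trans with (H lam (a - b * xs) x1). apply H_mono_c; nra.
  rewrite <- HF at 2. apply H_mono_x; lra.
Qed.

Lemma part_d a b lam xs : 1 < lam -> 0 < b -> a <= lam - (lam - 1) * ln lam ->
  is_pos_fixed a b lam xs ->
  forall x0 x1,
      ((xs <= x0 <= lam /\ 0 <= x1 <= xs) \/ (0 <= x0 <= xs /\ xs <= x1 <= lam)) ->
      ~ Un_cv (sol a b lam x0 x1) 0.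
Proof.
  intros Hl Hb Ha Hf x0 x1 [[I1 I2]|[I1 I2]].
  - apply (inv_notcv a b lam x0 x1 xs 0 Hl Hb Ha Hf). unfold Inv. split; assumption.
  - pose proof (fixed_lt_lam _ _ _ _ Hl Hb Ha Hf) as Hxl.
    pose proof (H_fix _ _ _ _ Hf) as HF. pose proof Hf as [Hxs _].
    apply (inv_notcv a b lam x0 x1 xs 1 Hl Hb Ha Hf). unfold Inv. split; [exact I2|].
    change (sol a b lam x0 x1 2) with (H lam (a - b * x1) x0).
    split; [apply H_ge0|].
    apply Rle_trans with (H lam (a - b * xs) x0). apply H_mono_c; nra.
    rewrite <- HF at 2. apply H_mono_x; lra.
Qed.

Theorem mainTheorem10 (lam b a : R) (Hlam : 1 < lam) (Hb : 0 < b) :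
  (* (a) *)
  ((forall x0 x1, 0 <= x0 -> 0 <= x1 -> Un_cv (sol a b lam x0 x1) 0) <->
     a < (lam - 1) * (1 - ln (lam - 1)))
  /\
  (* (b) *)
  ((lam - 1) * (1 - ln (lam - 1)) < a ->
   a < (lam - 1) * (1 - ln (lam - 1) + ln (b + 1)) ->
   (~ exists x, is_pos_fixed a b lam x) /\
   (exists x0 x1, (forall n, 0 < sol a b lam x0 x1 n) /\
                  ~ Un_cv (sol a b lam x0 x1) 0))
  /\
  (* (c) and (d) *)
  (b <= (lam - 1) / lam * exp (1 / (lam - 1)) - 1 ->
   (lam - 1) * (1 - ln (lam - 1) + ln (b + 1)) <= a ->
   a <= lam - (lam - 1) * ln lam ->
   forall xs, is_smallest_pos_fixed a b lam xs ->
   (exists x0 x1, 0 < x0 < xs /\ 0 < x1 < xs /\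
      (forall n, 0 < sol a b lam x0 x1 n) /\ ~ Un_cv (sol a b lam x0 x1) 0)
   /\
   (forall x0 x1,
      ((xs <= x0 <= lam /\ 0 <= x1 <= xs) \/ (0 <= x0 <= xs /\ xs <= x1 <= lam)) ->
      ~ Un_cv (sol a b lam x0 x1) 0)).
Proof.
  split; [|split].
  - split.
    + intros Hall. destruct (Rlt_le_dec a (thr lam)) as [Hlt|Hge]; [exact Hlt|exfalso].
      destruct (Rle_lt_or_eq_dec _ _ Hge) as [Hlt|Heq].
      * destruct (constr a b lam Hlam Hb Hlt) as [x0 [x1 [H0 [H1 [_ Hn]]]]].
        apply Hn, Hall; lra.
      * apply (not_cv (sol a b lam (lam - 1) 0) (lam - 1) 0 ltac:(lra)).
        { intro k. replace (0 + 2 * k)%nat with (2 * k)%nat by lia. rewrite (proj1 (const_case a b lam Hlam (eq_sym Heq) k)). lra. }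
        apply Hall; lra.
    + intros Ha x0 x1 H0 H1. apply part_a_conv; auto.
  - intros Ha1 Ha2. split.
    + intros [x Hx]. exact (no_fixed a b lam x Hlam Hb Ha2 Hx).
    + destruct (constr a b lam Hlam Hb Ha1) as [x0 [x1 [_ [_ [Hp Hn]]]]].
      exists x0, x1. auto.
  - intros _ Ha1 Ha2 xs [Hf _]. split.
    + apply part_c; auto.
    + apply part_d; auto.
Qed.
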